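(* Let $A\in\mathrm U(d)$. Then there is a unitary $B\in\mathrm U(d)$ such that $B^2=1_d$ and $\|B-A\|\le\|1_d-A^2\|$ for every unitarily invariant norm $\|\cdot\|$ on $\mathrm M_d(\mathbb C)$.
   Context: A norm $\|\cdot\|$ on $\mathrm M_d(\mathbb C)$ is unitarily invariant if $\|UAV\|=\|A\|$ for all $A\in\mathrm M_d(\mathbb C)$ and $U,V\in\mathrm U(d)$. *)

(* Defs.v *)
From HB Require Import structures.
From mathcomp Require Import all_boot all_order all_algebra.
From mathcomp Require Import sesquilinear spectral.
From mathcomp Require Import complex.
From mathcomp Require Import reals.
Set Implicit Arguments. Unset Strict Implicit. Unset Printing Implicit Defensive.
Import Order.TTheory GRing.Theory Num.Theory.
Local Open Scope ring_scope.

(* Complex numbers: C = R[i] with R : realType (the real numbers).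
   |c| for c : R[i] is [ComplexField.Normc.normc c : R] (= sqrt (Re c^2 + Im c^2)). *)

Definition is_mxnorm (R : realType) (d : nat) (N : 'M[R[i]]_d -> R) : Prop :=
  [/\ (forall A, 0 <= N A),
      (forall A, N A = 0 -> A = 0),
      (forall (c : R[i]) A, N (c *: A) = ComplexField.Normc.normc c * N A) &
      (forall A B, N (A + B) <= N A + N B)].

Definition unitarily_invariant_norm (R : realType) (d : nat)
    (N : 'M[R[i]]_d -> R) : Prop :=
  is_mxnorm N /\
  (forall (A U V : 'M[R[i]]_d), U \is unitarymx -> V \is unitarymx ->
     N (U *m A *m V) = N A).

(* Main.v *)
Require Import Defs.
From HB Require Import structures.
From mathcomp Require Import all_boot all_order all_algebra.
From mathcomp Require Import sesquilinear spectral.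
From mathcomp Require Import complex.
From mathcomp Require Import reals.
From mathcomp Require Import ring.
Import Order.TTheory GRing.Theory Num.Theory.
Local Open Scope ring_scope.

Section S.
Variable R : realType.
Local Notation C := (R[i]).

Lemma normc2 : ComplexField.Normc.normc (2%:R : C) = 2.
Proof. by rewrite -[2%:R]/((1:C) *+ 2) normcMn ComplexField.Normc.normc1. Qed.

Lemma cM (x y : C) : (x * y)^* = x^* * y^*. Proof. exact: rmorphM. Qed.
Lemma cD (x y : C) : (x + y)^* = x^* + y^*. Proof. exact: rmorphD. Qed.
Lemma cB (x y : C) : (x - y)^* = x^* - y^*. Proof. exact: rmorphB. Qed.
Lemma cV (x : C) : (x^-1)^* = (x^*)^-1. Proof. exact: fmorphV. Qed.
Lemma cN (x : C) : (- x)^* = - x^*. Proof. exact: rmorphN. Qed.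
Lemma c1 : (1 : C)^* = 1. Proof. exact: rmorph1. Qed.

Lemma split_unit (a : C) : `|a| <= 1 ->
  exists u v : C, [/\ u * u^* = 1, v * v^* = 1 & u + v = a *+ 2].
Proof.
move=> ha.
have [->|a0] := eqVneq a 0.
  by exists 1, (-1); rewrite ?rmorphN ?rmorph1 mulr1 mulrNN mulr1 subrr mul0rn.
set r := `|a|.
have r0 : r != 0 by rewrite normr_eq0.
have rge : 0 <= r by rewrite normr_ge0.
have r2 : r ^+ 2 <= 1.
  by rewrite -(expr1n _ 2) ler_pXn2r // nnegrE.
set s := sqrtC (1 - r ^+ 2).
have sge : 0 <= s by rewrite sqrtC_ge0 subr_ge0.
have s2 : s ^+ 2 = 1 - r ^+ 2 by rewrite sqrtCK.
have aa : a * a^* = r ^+ 2 by rewrite normCK.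
have ii : 'i * 'i = -1 :> C by rewrite -expr2 sqrCi.
exists (a / r * (r + 'i * s)), (a / r * (r - 'i * s)); split.
- rewrite !cM cD cM cV conjCi (geC0_conj rge) (geC0_conj sge).
  transitivity ((a * a^*) * (r * r - ('i * 'i) * (s * s)) / (r * r)); first by field.
  by rewrite aa ii -!expr2 s2; field.
- rewrite !cM cB cM cV conjCi (geC0_conj rge) (geC0_conj sge).
  transitivity ((a * a^*) * (r * r - ('i * 'i) * (s * s)) / (r * r)); first by field.
  by rewrite aa ii -!expr2 s2; field.
- by field.
Qed.

Lemma diag_unitary n (u : 'rV[C]_n) :
  (forall j, u 0 j * (u 0 j)^* = 1) -> diag_mx u \is unitarymx.
Proof.
move=> hu; apply/unitarymxP; apply/matrixP => i j.
rewrite mul_diag_mx !mxE.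
have [<-|ne] := eqVneq i j; first by rewrite ?eqxx ?mulr1n hu.
by rewrite !mulr0n rmorph0 mulr0.
Qed.

Lemma one_unitary n : (1%:M : 'M[C]_n) \is unitarymx.
Proof.
apply/unitarymxP; apply/matrixP => i j; rewrite !mxE.
under eq_bigr do rewrite !mxE.
rewrite (bigD1 i) //= big1 ?addr0; last first.
  by move=> k /negbTE nk; rewrite eq_sym nk mul0r.
rewrite eqxx mul1r [j == i]eq_sym; case: (i == j) => /=; [exact: c1 | exact: rmorph0].
Qed.

Lemma diag_mono d (N : 'M[C]_d -> R) : unitarily_invariant_norm N ->
  forall x y : 'rV[C]_d, (forall j, `|x 0 j| <= `|y 0 j|) ->
  N (diag_mx x) <= N (diag_mx y).
Proof.
move=> [[N0 _ NZ ND] NU] x y hxy.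
have : forall j, exists uv : C * C,
    [/\ uv.1 * uv.1^* = 1, uv.2 * uv.2^* = 1 & x 0 j *+ 2 = (uv.1 + uv.2) * y 0 j].
  move=> j; have [y0|y0] := eqVneq (y 0 j) 0.
    have x0 : x 0 j = 0.
      by apply/normr0_eq0/eqP; rewrite eq_le normr_ge0 andbT -(normr0 C) -y0.
    exists (1, -1); rewrite /= cN c1 mulrNN !mulr1 x0 y0 mulr0 mul0rn; split => //.
  have ypos : 0 < `|y 0 j| by rewrite normr_gt0.
  have := @split_unit (x 0 j / y 0 j).
  rewrite normf_div ler_pdivrMr // mul1r => /(_ (hxy j)) [u [v [hu hv huv]]].
  exists (u, v); split => //=; rewrite huv mulrnAl mulfVK //.
move=> /fin_all_exists [f hf].
set U := diag_mx (\row_j (f j).1); set V := diag_mx (\row_j (f j).2).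
have eX : diag_mx x *+ 2 = U *m diag_mx y + V *m diag_mx y.
  apply/matrixP => i j; rewrite !mul_diag_mx !mxE.
  case: (i == j); last by rewrite !mulr0n !mulr0 addr0.
  by rewrite !mulr1n -mulr2n; case: (hf i) => _ _ ->; rewrite mulrDl.
have NUY : forall W, W \is unitarymx -> N (W *m diag_mx y) = N (diag_mx y).
  by move=> W hW; rewrite -[W *m _]mulmx1 NU // one_unitary.
have hU : U \is unitarymx by apply: diag_unitary => j; rewrite mxE; case: (hf j).
have hV : V \is unitarymx by apply: diag_unitary => j; rewrite mxE; case: (hf j).
rewrite -(ler_pMn2r (n := 2)) //.
have -> : N (diag_mx x) *+ 2 = N (diag_mx x *+ 2).
  by rewrite -scaler_nat NZ normc2 mulr_natl.
rewrite eX; apply: le_trans (ND _ _) _.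
by rewrite !NUY // mulr2n.
Qed.

Definition eps (l : C) : C := if 0 <= l + l^* then 1 else -1.

Lemma eps_sq l : eps l * eps l = 1.
Proof. by rewrite /eps; case: ifP => _; rewrite ?mulrNN mulr1. Qed.

Lemma eps_unit l : eps l * (eps l)^* = 1.
Proof. by rewrite /eps; case: ifP => _; rewrite ?cN c1 ?mulrNN mulr1. Qed.

Lemma ge1_norm (z : C) : 1 <= z * z^* -> 1 <= `|z|.
Proof.
move=> h; rewrite -(ler_pXn2r (n := 2)) // ?nnegrE ?normr_ge0 ?ler01 //.
by rewrite expr1n normCK.
Qed.

Lemma eps_bound l : l * l^* = 1 -> `|eps l - l| <= `|1 - l * l|.
Proof.
move=> hl; set t := l + l^*.
have tr : t \is Num.real by rewrite CrealE /t cD conjCK addrC.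
have e1 : 1 - l * l = (1 - l) * (1 + l) by ring.
have Ep : (1 + l) * (1 + l)^* = 1 + (1 + t).
  rewrite cD c1 mulrDr !mulrDl mul1r !mulr1 hl /t; ring.
have Em : (1 - l) * (1 - l)^* = 1 + (1 - t).
  rewrite cB c1 mulrBr !mulrBl mul1r !mulr1 hl /t; ring.
rewrite e1 normrM /eps -/t; case: ifP => ht.
  apply: ler_peMr; first exact: normr_ge0.
  by apply: ge1_norm; rewrite Ep lerDl addr_ge0 ?ler01.
have tle : t <= 0.
  by move: tr; rewrite realE ht.
have -> : -1 - l = - (1 + l) by ring.
rewrite normrN mulrC; apply: ler_peMr; first exact: normr_ge0.
apply: ge1_norm; rewrite Em lerDl subr_ge0.
exact: le_trans tle ler01.
Qed.

Lemma conj_mul n (P Q X Y : 'M[C]_n) : P *m Q = 1%:M ->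
  (Q *m X *m P) *m (Q *m Y *m P) = Q *m (X *m Y) *m P.
Proof.
move=> PQ; rewrite !mulmxA; congr (_ *m _).
by rewrite -[Q *m X *m P *m Q]mulmxA PQ mulmx1.
Qed.
End S.
Arguments eps {R} l.

Theorem proposition1p4 (R : realType) (d : nat) (A : 'M[R[i]]_d) :
  A \is unitarymx ->
  exists B : 'M[R[i]]_d,
    [/\ B \is unitarymx,
        B *m B = 1%:M &
        forall N : 'M[R[i]]_d -> R, unitarily_invariant_norm N ->
          N (B - A) <= N (1%:M - A *m A)].
Proof.
move=> hA.
have hAu := unitarymx_unit hA.
have hnorm : A \is normalmx.
  apply/normalmxP; rewrite (unitarymxP hA) -(invmx_unitary hA) mulVmx //.
have /orthomx_spectralP eA := hnorm.
have hP := spectral_unitarymx A.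
move: eA; set P := spectralmx A; set l := spectral_diag A.
rewrite (invmx_unitary hP) => eA.
set Q := (P ^t*)%sesqui.
have hQ : Q \is unitarymx by rewrite trmxC_unitary.
have PQ : P *m Q = 1%:M by apply/unitarymxP.
have QP : Q *m P = 1%:M by have := unitarymxP hQ; rewrite trmxCK.
set D := diag_mx l.
have hD : D \is unitarymx.
  have -> : D = P *m A *m Q by rewrite eA !mulmxA PQ mul1mx -mulmxA PQ mulmx1.
  by rewrite !mul_unitarymx.
have hl : forall j, l 0 j * (l 0 j)^* = 1.
  move=> j; have /matrixP/(_ j j) := unitarymxP hD.
  by rewrite mul_diag_mx !mxE eqxx !mulr1n.
set e := \row_j eps (l 0 j).
exists (Q *m diag_mx e *m P); split.
- apply: (mul_unitarymx (mul_unitarymx hQ _) hP).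
  apply: diag_unitary => j; rewrite mxE; exact: eps_unit.
- rewrite (@conj_mul _ _ _ _ _ _ PQ) mulmx_diag.
  have -> : diag_mx (\row_j (e 0 j * e 0 j)) = 1%:M.
    apply/matrixP => i j; rewrite !mxE eps_sq; by case: (i == j).
  by rewrite mulmx1.
move=> N hN; have NU := hN.2.
rewrite eA -/P -/Q -/D (@conj_mul _ _ _ _ _ _ PQ) -mulmxBl -mulmxBr.
have -> : (1%:M : 'M[R[i]]_d) - Q *m (D *m D) *m P = Q *m (1%:M - D *m D) *m P.
  by rewrite mulmxBr mulmxBl mulmx1 QP.
rewrite !(NU _ _ _ hQ hP) -raddfB mulmx_diag.
have -> : (1%:M : 'M[R[i]]_d) - diag_mx (\row_j (l 0 j * l 0 j))
    = diag_mx (\row_j (1 - l 0 j * l 0 j)).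
  by apply/matrixP => i j; rewrite !mxE; case: (i == j); rewrite ?mulr1n ?mulr0n ?subr0.
apply: (@diag_mono _ _ _ hN) => j; rewrite !mxE; exact: eps_bound.
Qed.
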